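(* Let $(F_X,F_Y,F_Z)$ be distribution functions, $F=F_XF_Z$, $G=F_YF_Z$, $K=F_Y+F_Z-F_YF_Z$. Let $\mathbf\Phi$, $\mathbf\Psi$, $\mathbf X$ be nonempty sets of functions $[0,1]\to[0,1]$ such that every triple $(\phi,\psi,\chi)\in\mathbf\Phi\times\mathbf\Psi\times\mathbf X$ is associated to $(F_X,F_Y,F_Z)$. Let $\phi_{\min}=\inf\mathbf\Phi$, $\phi_{\max}=\sup\mathbf\Phi$, $\psi_{\min}=\inf\mathbf\Psi$, $\psi_{\max}=\sup\mathbf\Psi$, $\chi_{\min}=\inf\mathbf X$, $\chi_{\max}=\sup\mathbf X$ (pointwise). Then every triple $(\phi,\psi,\chi)$ with $\phi\in\mathbf\Phi\cup\{\phi_{\min},\phi_{\max}\}$, $\psi\in\mathbf\Psi\cup\{\psi_{\min},\psi_{\max}\}$, $\chi\in\mathbf X\cup\{\chi_{\min},\chi_{\max}\}$ is associated to $(F_X,F_Y,F_Z)$.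
   Context: Distribution functions are non-decreasing maps $\mathbb R\to[0,1]$. A triple $(\phi,\psi,\chi)$ of functions $[0,1]\to[0,1]$ is associated to $(F_X,F_Y,F_Z)$ if: $\phi(F(x))=F_X(x)$ whenever $F(x)>0$, $\psi(G(y))=F_Y(y)$ whenever $G(y)>0$, $\chi(K(y))=F_Y(y)$ whenever $K(y)<1$; $\phi$ and $\psi$ are non-decreasing with $\phi(0)=\psi(0)=0$, $\phi(1)=\psi(1)=1$, and $\phi(u)/u$, $\psi(v)/v$ non-increasing on $(0,1]$; and $\chi$ is non-decreasing with $\chi(0)=0$, $\chi(1)=1$, and $\chi_*(w)=\frac{1-\chi(w)}{w-\chi(w)}$ (values in $[1,\infty]$) non-increasing on $[0,1]$. *)

(* Defs.v *)
From HB Require Import structures.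
From mathcomp Require Import all_boot all_order all_algebra.
From mathcomp Require Import boolp classical_sets reals constructive_ereal.
Set Implicit Arguments. Unset Strict Implicit. Unset Printing Implicit Defensive.
Import Order.TTheory GRing.Theory Num.Theory.
Local Open Scope classical_set_scope.
Local Open Scope ring_scope.

Section Defs.
Variable R : realType.

Definition distribution_function (F : R -> R) : Prop :=
  (forall x y, x <= y -> F x <= F y) /\ (forall x, 0 <= F x <= 1).

(* a function [0,1] -> [0,1] (represented as R -> R, only values on [0,1] matter) *)
Definition unit_fun (f : R -> R) : Prop :=
  forall u, 0 <= u <= 1 -> 0 <= f u <= 1.

Definition phi_cond (phi : R -> R) : Prop :=
  (forall u v, 0 <= u -> u <= v -> v <= 1 -> phi u <= phi v) /\
  phi 0 = 0 /\ phi 1 = 1 /\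
  (forall u v, 0 < u -> u <= v -> v <= 1 -> phi v / v <= phi u / u).

(* chi_*(w) = (1 - chi w)/(w - chi w) in [1, +oo];
   convention: x/0 = +oo for w < 1 (when chi w = w), and chi_*(1) = 1
   (the 0/0 case at w = 1 takes the least admissible value) *)
Definition chi_star (chi : R -> R) (w : R) : \bar R :=
  if w == 1 then 1%E
  else if chi w == w then +oo%E
  else ((1 - chi w) / (w - chi w))%:E.

Definition chi_cond (chi : R -> R) : Prop :=
  (forall u v, 0 <= u -> u <= v -> v <= 1 -> chi u <= chi v) /\
  chi 0 = 0 /\ chi 1 = 1 /\
  (forall w, 0 <= w -> w <= 1 -> (1 <= chi_star chi w)%E) /\
  (forall v w, 0 <= v -> v <= w -> w <= 1 -> (chi_star chi w <= chi_star chi v)%E).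

Definition associated (FX FY FZ phi psi chi : R -> R) : Prop :=
  (forall x, 0 < FX x * FZ x -> phi (FX x * FZ x) = FX x) /\
  (forall y, 0 < FY y * FZ y -> psi (FY y * FZ y) = FY y) /\
  (forall y, FY y + FZ y - FY y * FZ y < 1 ->
             chi (FY y + FZ y - FY y * FZ y) = FY y) /\
  phi_cond phi /\ phi_cond psi /\ chi_cond chi.

Definition fun_inf (S : set (R -> R)) : R -> R :=
  fun u => inf [set f u | f in S].
Definition fun_sup (S : set (R -> R)) : R -> R :=
  fun u => sup [set f u | f in S].

End Defs.

(* Main.v *)
Require Import Defs.
From HB Require Import structures.
From mathcomp Require Import all_boot all_order all_algebra.
From mathcomp Require Import boolp classical_sets reals constructive_ereal.
From mathcomp Require Import lra.
Import Order.TTheory GRing.Theory Num.Theory.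
Local Open Scope classical_set_scope.
Local Open Scope ring_scope.
Set Implicit Arguments. Unset Strict Implicit.

Section S.
Variable R : realType.
Implicit Types (Fam : set (R -> R)) (p q a b c x : R).

Definition bnd Fam p := forall f, Fam f -> 0 <= f p <= 1.

Lemma inf_le_mem Fam p f : bnd Fam p -> Fam f -> fun_inf Fam p <= f p.
Proof.
move=> hb hf; apply: ge_inf; last by exists f.
exists 0 => _ [g hg <-]; by case/andP: (hb g hg).
Qed.

Lemma mem_le_sup Fam p f : bnd Fam p -> Fam f -> f p <= fun_sup Fam p.
Proof.
move=> hb hf; apply: ub_le_sup; last by exists f.
exists 1 => _ [g hg <-]; by case/andP: (hb g hg).
Qed.

Lemma le_inf Fam p x : Fam !=set0 -> (forall f, Fam f -> x <= f p) -> x <= fun_inf Fam p.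
Proof.
move=> [f hf] h; apply: lb_le_inf; first by exists (f p), f.
by move=> _ [g hg <-]; apply: h.
Qed.

Lemma sup_le Fam p x : Fam !=set0 -> (forall f, Fam f -> f p <= x) -> fun_sup Fam p <= x.
Proof.
move=> [f hf] h; apply: ge_sup; first by exists (f p), f.
by move=> _ [g hg <-]; apply: h.
Qed.

Lemma lin_inf Fam p q a b c : Fam !=set0 -> bnd Fam p -> bnd Fam q -> 0 <= a -> 0 <= c ->
  (forall f, Fam f -> a * f p <= b + c * f q) ->
  a * fun_inf Fam p <= b + c * fun_inf Fam q.
Proof.
move=> [f0 hf0] hp hq ha hc h.
have H1 : forall f, Fam f -> a * fun_inf Fam p <= b + c * f q.
  move=> f hf; apply: le_trans (h f hf); apply: ler_wpM2l => //; exact: inf_le_mem.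
rewrite le_eqVlt in hc; case/orP: hc => [/eqP c0|hc]; first subst c.
  by have := H1 f0 hf0; rewrite !mul0r !addr0.
rewrite -lerBlDl -ler_pdivrMl //. apply: le_inf; first by exists f0.
move=> f hf; rewrite ler_pdivrMl // lerBlDl; exact: H1.
Qed.

Lemma lin_sup Fam p q a b c : Fam !=set0 -> bnd Fam p -> bnd Fam q -> 0 <= a -> 0 <= c ->
  (forall f, Fam f -> a * f p <= b + c * f q) ->
  a * fun_sup Fam p <= b + c * fun_sup Fam q.
Proof.
move=> [f0 hf0] hp hq ha hc h.
have H1 : forall f, Fam f -> a * f p <= b + c * fun_sup Fam q.
  move=> f hf; apply: le_trans (h f hf) _; rewrite lerD2l; apply: ler_wpM2l => //; exact: mem_le_sup.
rewrite le_eqVlt in ha; case/orP: ha => [/eqP a0|ha]; first subst a.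
  by have := H1 f0 hf0; rewrite !mul0r.
rewrite -ler_pdivlMl //; apply: sup_le; first by exists f0.
move=> f hf; rewrite ler_pdivlMl //; exact: H1.
Qed.
Lemma divle (a b c d : R) : 0 < b -> 0 < d -> (a/b <= c/d) = (a*d <= c*b).
Proof. by move=> hb hd; rewrite ler_pdivrMr // mulrAC ler_pdivlMr. Qed.

Definition Lc (chi : R -> R) := forall v w, 0 <= v -> v <= w -> w <= 1 ->
  (1 - v) * chi w <= (w - v) + (1 - w) * chi v.

Lemma star_fin (chi : R -> R) w : w != 1 -> chi w != w ->
  chi_star chi w = ((1 - chi w) / (w - chi w))%:E.
Proof. by move=> h1 h2; rewrite /chi_star (negbTE h1) (negbTE h2). Qed.

Lemma star_inf (chi : R -> R) w : w != 1 -> chi w = w -> chi_star chi w = +oo%E.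
Proof. by move=> h1 h2; rewrite /chi_star (negbTE h1) h2 eqxx. Qed.

Lemma chi_le_id (chi : R -> R) (w : R) : chi_cond chi -> 0 <= w -> w <= 1 -> chi w <= w.
Proof.
case=> _ [_ [c1 [s1 _]]] w0 w1.
have [->|wn1] := eqVneq w 1; first by rewrite c1.
have [->//|cw] := eqVneq (chi w) w.
have := s1 w w0 w1; rewrite star_fin // lee_fin.
rewrite leNgt; apply: contraNle => hlt.
have hw1 : w < 1 by rewrite lt_neqAle wn1 w1.
by rewrite ltr_ndivrMr ?subr_lt0 //; lra.
Qed.

Lemma chi_L (chi : R -> R) : chi_cond chi -> Lc chi.
Proof.
move=> hc; have [_ [_ [c1 [s1 s2]]]] := hc.
move=> v w v0 vw w1.
have [->|wn1] := eqVneq w 1; first by rewrite c1; lra.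
have hw1 : w < 1 by rewrite lt_neqAle wn1 w1.
have vn1 : v != 1 by rewrite lt_eqF //; apply: le_lt_trans hw1.
have cv := @chi_le_id chi v hc v0 (le_trans vw w1).
have cw := @chi_le_id chi w hc (le_trans v0 vw) w1.
have [ev|nv] := eqVneq (chi v) v.
  rewrite ev; nra.
have [ew|nw] := eqVneq (chi w) w.
  have := s2 v w v0 vw w1; rewrite star_inf // star_fin //.
have := s2 v w v0 vw w1; rewrite !star_fin // lee_fin divle; last 2 first.
- by rewrite subr_gt0 lt_neqAle nw cw.
- by rewrite subr_gt0 lt_neqAle nv cv.
nra.
Qed.

Lemma chi_back (chi : R -> R) :
  (forall u v, 0 <= u -> u <= v -> v <= 1 -> chi u <= chi v) ->
  chi 0 = 0 -> chi 1 = 1 ->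
  (forall w, 0 <= w -> w <= 1 -> chi w <= w) -> Lc chi -> chi_cond chi.
Proof.
move=> hm c0 c1 hid hL.
have s1 : forall w, 0 <= w -> w <= 1 -> (1 <= chi_star chi w)%E.
  move=> w w0 w1.
  have [->|wn1] := eqVneq w 1; first by rewrite /chi_star eqxx.
  have [ew|nw] := eqVneq (chi w) w; first by rewrite star_inf // leey.
  have cw := hid w w0 w1.
  rewrite star_fin // lee_fin ler_pdivlMr ?mul1r; last by rewrite subr_gt0 lt_neqAle nw cw.
  lra.
do 4 split => //.
move=> v w v0 vw w1.
have [->|wn1] := eqVneq w 1; first by rewrite {1}/chi_star eqxx; apply: s1 => //; apply: le_trans vw w1.
have hw1 : w < 1 by rewrite lt_neqAle wn1 w1.
have vn1 : v != 1 by rewrite lt_eqF //; apply: le_lt_trans hw1.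
have cv := hid v v0 (le_trans vw w1).
have cw := hid w (le_trans v0 vw) w1.
have hl := hL v w v0 vw w1.
have [ev|nv] := eqVneq (chi v) v; first by rewrite (@star_inf chi v vn1 ev) leey.
have [ew|nw] := eqVneq (chi w) w.
  exfalso; move: nv; rewrite ew in hl.
  have : v - chi v <= 0 by nra.
  by move=> h; rewrite neq_lt; apply/negP; rewrite negb_or; apply/andP; split; lra.
rewrite !star_fin // lee_fin divle; last 2 first.
- by rewrite subr_gt0 lt_neqAle nw cw.
- by rewrite subr_gt0 lt_neqAle nv cv.
nra.
Qed.
Lemma bnd_of Fam p : (forall f, Fam f -> unit_fun f) -> 0 <= p <= 1 -> bnd Fam p.
Proof. by move=> hu hp f hf; apply: hu. Qed.

Lemma pt_ext Fam (A B : R -> R) (C : R -> Prop) (g : R -> R) : Fam !=set0 ->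
  (forall f, Fam f -> unit_fun f) -> (forall x, 0 <= A x <= 1) ->
  (g = fun_inf Fam \/ g = fun_sup Fam) ->
  (forall f, Fam f -> forall x, C x -> f (A x) = B x) -> forall x, C x -> g (A x) = B x.
Proof.
move=> hne hu hA hg hf x hx; have hb := bnd_of hu (hA x).
have [f0 hf0] := hne.
case: hg => ->; apply/eqP; rewrite eq_le; apply/andP; split.
- by rewrite -(hf f0 hf0 x hx); apply: inf_le_mem.
- by apply: le_inf => // f hf1; rewrite (hf f hf1 x hx).
- by apply: sup_le => // f hf1; rewrite (hf f hf1 x hx).
- by rewrite -(hf f0 hf0 x hx); apply: mem_le_sup.
Qed.

Lemma lin_ext Fam p q a b c (g : R -> R) : Fam !=set0 ->
  (forall f, Fam f -> unit_fun f) -> 0 <= p <= 1 -> 0 <= q <= 1 -> 0 <= a -> 0 <= c ->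
  (g = fun_inf Fam \/ g = fun_sup Fam) ->
  (forall f, Fam f -> a * f p <= b + c * f q) -> a * g p <= b + c * g q.
Proof.
move=> hne hu hp hq ha hc [->|->] h.
- by apply: lin_inf => //; apply: bnd_of.
- by apply: lin_sup => //; apply: bnd_of.
Qed.

Lemma phi_ext Fam (g : R -> R) : Fam !=set0 ->
  (forall f, Fam f -> unit_fun f) -> (forall f, Fam f -> phi_cond f) ->
  (g = fun_inf Fam \/ g = fun_sup Fam) -> phi_cond g.
Proof.
move=> hne hu hc hg.
have e01 : forall y : R, y = 0 \/ y = 1 -> g y = y.
  move=> y hy.
  have := @pt_ext Fam (fun _ => y) (fun _ => y) (fun _ => True) g hne hu.
  apply=> //; first by move=> _; case: hy => ->; rewrite lexx ler01.
  move=> f hf _ _; have [_ [h0 [h1 _]]] := hc f hf; by case: hy => ->.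
split; last split; last split.
- move=> u v u0 uv v1.
  have := @lin_ext Fam u v 1 0 1 g hne hu; rewrite !mul1r add0r; apply=> //.
  + by rewrite u0 (le_trans uv v1).
  + by rewrite v1 (le_trans u0 uv).
  + by move=> f hf; rewrite !mul1r add0r; have [hm _] := hc f hf; apply: hm.
- by apply: e01; left.
- by apply: e01; right.
- move=> u v u0 uv v1.
  have v0 : 0 < v by apply: lt_le_trans uv.
  rewrite divle //.
  have := @lin_ext Fam v u u 0 v g hne hu; rewrite add0r; move=> H.
  rewrite mulrC [X in _ <= X]mulrC; apply: H => //.
  + by rewrite v1 ltW.
  + by rewrite (ltW u0) (le_trans uv v1).
  + exact: ltW.
  + exact: ltW.
  + move=> f hf; rewrite add0r; have [_ [_ [_ hr]]] := hc f hf.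
    have := hr u v u0 uv v1; rewrite divle // => H2.
    by rewrite mulrC [X in _ <= X]mulrC.
Qed.

Lemma chi_fwd (chi : R -> R) : chi_cond chi ->
  (forall u v, 0 <= u -> u <= v -> v <= 1 -> chi u <= chi v) /\
  chi 0 = 0 /\ chi 1 = 1 /\
  (forall w, 0 <= w -> w <= 1 -> chi w <= w) /\ Lc chi.
Proof.
move=> hc; have [hm [h0 [h1 _]]] := hc; do 3 split => //; split.
- by move=> w w0 w1; apply: (@chi_le_id chi w hc).
- exact: chi_L.
Qed.

Lemma chi_ext Fam (g : R -> R) : Fam !=set0 ->
  (forall f, Fam f -> unit_fun f) -> (forall f, Fam f -> chi_cond f) ->
  (g = fun_inf Fam \/ g = fun_sup Fam) -> chi_cond g.
Proof.
move=> hne hu hc hg.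
have e01 : forall y : R, y = 0 \/ y = 1 -> g y = y.
  move=> y hy.
  have := @pt_ext Fam (fun _ => y) (fun _ => y) (fun _ => True) g hne hu.
  apply=> //; first by move=> _; case: hy => ->; rewrite lexx ler01.
  move=> f hf _ _; have [_ [h0 [h1 _]]] := hc f hf; by case: hy => ->.
apply: chi_back.
- move=> u v u0 uv v1.
  have := @lin_ext Fam u v 1 0 1 g hne hu; rewrite !mul1r add0r; apply=> //.
  + by rewrite u0 (le_trans uv v1).
  + by rewrite v1 (le_trans u0 uv).
  + by move=> f hf; rewrite !mul1r add0r; have [hm _] := chi_fwd (hc f hf); apply: hm.
- by apply: e01; left.
- by apply: e01; right.
- move=> w w0 w1.
  have := @lin_ext Fam w w 1 w 0 g hne hu; rewrite !mul1r mul0r addr0; apply=> //.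
  + by rewrite w0 w1.
  + by rewrite w0 w1.
  + by move=> f hf; rewrite mul1r mul0r addr0; have [_ [_ [_ [hi _]]]] := chi_fwd (hc f hf); apply: hi.
- move=> v w v0 vw w1.
  apply: (@lin_ext Fam w v (1 - v) (w - v) (1 - w) g hne hu) => //.
  + by rewrite w1 (le_trans v0 vw).
  + by rewrite v0 (le_trans vw w1).
  + by rewrite subr_ge0 (le_trans vw w1).
  + by rewrite subr_ge0.
  + by move=> f hf; have [_ [_ [_ [_ hL]]]] := chi_fwd (hc f hf); apply: hL.
Qed.
End S.
Unset Implicit Arguments.

Theorem proposition4 (R : realType) (FX FY FZ : R -> R)
  (Phi Psi Chi : set (R -> R)) :
  distribution_function FX -> distribution_function FY ->
  distribution_function FZ ->
  Phi !=set0 -> Psi !=set0 -> Chi !=set0 ->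
  (forall f, Phi f -> unit_fun f) ->
  (forall f, Psi f -> unit_fun f) ->
  (forall f, Chi f -> unit_fun f) ->
  (forall phi psi chi, Phi phi -> Psi psi -> Chi chi ->
     associated FX FY FZ phi psi chi) ->
  forall phi psi chi,
    (Phi phi \/ phi = fun_inf Phi \/ phi = fun_sup Phi) ->
    (Psi psi \/ psi = fun_inf Psi \/ psi = fun_sup Psi) ->
    (Chi chi \/ chi = fun_inf Chi \/ chi = fun_sup Chi) ->
    associated FX FY FZ phi psi chi.
Proof.
move=> [_ bX] [_ bY] [_ bZ] hP hS hC uP uS uC hA phi psi chi hphi hpsi hchi.
have [p0 hp0] := hP; have [s0 hs0] := hS; have [c0 hc0] := hC.
have bF : forall x, 0 <= FX x * FZ x <= 1.
  move=> x; have := bX x; have := bZ x; move=> /andP[? ?] /andP[? ?].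
  apply/andP; split; nra.
have bG : forall x, 0 <= FY x * FZ x <= 1.
  move=> x; have := bY x; have := bZ x; move=> /andP[? ?] /andP[? ?].
  apply/andP; split; nra.
have bK : forall x, 0 <= FY x + FZ x - FY x * FZ x <= 1.
  move=> x; have := bY x; have := bZ x; move=> /andP[? ?] /andP[? ?].
  apply/andP; split; nra.
split; last split; last split; last split; last split.
- case: hphi => [hp|hg].
    by have [h _] := hA phi s0 c0 hp hs0 hc0.
  apply: (@pt_ext R Phi (fun x => FX x * FZ x) FX (fun x => 0 < FX x * FZ x) phi hP uP bF hg).
  by move=> f hf; have [h _] := hA f s0 c0 hf hs0 hc0.
- case: hpsi => [hp|hg].
    by have [_ [h _]] := hA p0 psi c0 hp0 hp hc0.
  apply: (@pt_ext R Psi (fun x => FY x * FZ x) FY (fun x => 0 < FY x * FZ x) psi hS uS bG hg).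
  by move=> f hf; have [_ [h _]] := hA p0 f c0 hp0 hf hc0.
- case: hchi => [hp|hg].
    by have [_ [_ [h _]]] := hA p0 s0 chi hp0 hs0 hp.
  apply: (@pt_ext R Chi (fun x => FY x + FZ x - FY x * FZ x) FY
            (fun x => FY x + FZ x - FY x * FZ x < 1) chi hC uC bK hg).
  by move=> f hf; have [_ [_ [h _]]] := hA p0 s0 f hp0 hs0 hf.
- case: hphi => [hp|hg].
    by have [_ [_ [_ [h _]]]] := hA phi s0 c0 hp hs0 hc0.
  apply: (phi_ext hP uP _ hg).
  by move=> f hf; have [_ [_ [_ [h _]]]] := hA f s0 c0 hf hs0 hc0.
- case: hpsi => [hp|hg].
    by have [_ [_ [_ [_ [h _]]]]] := hA p0 psi c0 hp0 hp hc0.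
  apply: (phi_ext hS uS _ hg).
  by move=> f hf; have [_ [_ [_ [_ [h _]]]]] := hA p0 f c0 hp0 hf hc0.
- case: hchi => [hp|hg].
    by have [_ [_ [_ [_ [_ h]]]]] := hA p0 s0 chi hp0 hs0 hp.
  apply: (chi_ext hC uC _ hg).
  by move=> f hf; have [_ [_ [_ [_ [_ h]]]]] := hA p0 s0 f hp0 hs0 hf.
Qed.
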